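(* Let $\Theta=\{\theta_1,\dots,\theta_n\}$ with $n\ge2$, and let $\rho\in\operatorname{int}\Delta$ be the uninformed Bob's (known) prior. Suppose $(\mathcal{E},C)$ satisfies Assumption (A') below. Then there exists a generalized contract $(u,d_1,\dots,d_n)$, with $u>0$ and all $d_i>0$, that screens the uninformed Bob. That is, $W_{\mathbf d}(\mu)\ge 0$ for every $\mu\in\Delta$, while $u-\min_i\rho_i d_i<0$. Assumption (A'): there exist $\varepsilon>0$, $\eta>0$ and $T\in\mathbb{R}_+$ such that for every $\mu\in\Delta$ with $\|\mu-\rho\|<\eta$ there is $E_\mu\in\mathcal{E}$ with $\Upsilon(E_\mu,\mu)>\varepsilon$ and $C(E_\mu,\mu)\le T$.
   Context: **States and beliefs.** $\Theta=\{\theta_1,\dots,\theta_n\}$ is finite and $\Delta$ is the simplex of probability vectors on $\Theta$; $\operatorname{int}\Delta$ denotes the vectors with all entries strictly positive. **Experiments.** An experiment is $E=(S,\chi)$, with $S$ a measurable signal space and $\chi(\theta_i)=P_i$ a probability measure on $S$. Let $\nu$ be a $\sigma$-finite measure dominating $P_1,\dots,P_n$ and $p_i=dP_i/d\nu$. Define $$\Upsilon(E,\mu)=\min_i\mu_i-\int_S\min_i\{\mu_ip_i(s)\}\,d\nu(s).$$ $\mathcal{E}$ is a set of available experiments, and $C:\mathcal{E}\times\Delta\to\mathbb{R}_+\cup\{\infty\}$ is a cost functional. **Generalized contract.** A generalized contract is $(u,d_1,\dots,d_n)$ with $u>0$ and $d_i>0$. If Bob accepts, he receives $u$ and announces a state.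 If the announced state $\theta_i$ is the realized state, he pays $d_i$. Rejecting gives $0$. **Informed Bob.** The informed Bob with prior $\mu$ may acquire no information or one experiment $E\in\mathcal{E}$ at cost $C(E,\mu)$. He then announces optimally. His payoff from accepting is $$W_{\mathbf d}(\mu)=\max\Big\{u-\min_i d_i\mu_i,\ \sup_{E\in\mathcal{E}}\Big[u-\int_S\min_i\{d_i\mu_ip_i(s)\}\,d\nu(s)-C(E,\mu)\Big]\Big\}.$$ **Uninformed Bob.** The uninformed Bob cannot learn and is a subjective expected-utility maximizer with prior $\rho$. His payoff from accepting is $u-\min_i\rho_id_i$. **Screening.** A generalized contract screens the uninformed Bob if $W_{\mathbf d}(\mu)\ge0$ for all $\mu\in\Delta$ and the uninformed Bob's payoff from accepting is strictly negative. *)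

(* Defs.v *)
From HB Require Import structures.
From mathcomp Require Import all_boot all_order all_algebra.
From mathcomp Require Import all_classical all_reals.
From mathcomp Require Import ereal measure lebesgue_measure lebesgue_integral probability.
Set Implicit Arguments. Unset Strict Implicit. Unset Printing Implicit Defensive.
Import Order.TTheory GRing.Theory Num.Theory.
Local Open Scope ring_scope.
Local Open Scope classical_set_scope.

(* States are indexed by 'I_n; beliefs are vectors mu : 'I_n -> R. *)
Definition in_simplex (R : realType) (n : nat) (mu : 'I_n -> R) : Prop :=
  (forall i, 0 <= mu i) /\ \sum_(i < n) mu i = 1.

Definition in_int_simplex (R : realType) (n : nat) (mu : 'I_n -> R) : Prop :=
  (forall i, 0 < mu i) /\ \sum_(i < n) mu i = 1.

Definition dist_vec (R : realType) (n : nat) (mu rho : 'I_n -> R) : R :=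
  Num.sqrt (\sum_(i < n) (mu i - rho i) ^+ 2).

(* min_i of a finite family (in the extended reals; equals the real minimum
   whenever n >= 1). *)
Definition emin (R : realType) (n : nat) (f : 'I_n -> \bar R) : \bar R :=
  \big[mine/+oo%E]_(i < n) f i.

(* An experiment E = (S, chi) with chi(theta_i) = P_i, together with a
   sigma-finite dominating measure nu and densities p_i = dP_i/dnu. *)
Record experiment (R : realType) (n : nat) := Experiment {
  sig_disp : measure_display;
  sig_space : measurableType sig_disp;
  exP : 'I_n -> probability sig_space R;
  exnu : {measure set sig_space -> \bar R};
  exnu_sfin : sigma_finite setT exnu;
  exdens : 'I_n -> sig_space -> R;
  exdens_meas : forall i, measurable_fun setT (exdens i);
  exdens_ge0 : forall i s, 0 <= exdens i s;
  exP_dens : forall i (A : set sig_space), measurable A ->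
    exP i A = (\int[exnu]_(s in A) (exdens i s)%:E)%E
}.
Arguments exdens {R n} e i s.
Arguments exnu {R n} e.
Arguments exP {R n} e i.

Definition Upsilon (R : realType) (n : nat) (E : experiment R n)
    (mu : 'I_n -> R) : \bar R :=
  (emin (fun i => (mu i)%:E)
   - \int[exnu E]_s emin (fun i => (mu i * exdens E i s)%:E))%E.

Definition W (R : realType) (n : nat) (Ecal : experiment R n -> Prop)
    (C : experiment R n -> ('I_n -> R) -> \bar R)
    (u : R) (d : 'I_n -> R) (mu : 'I_n -> R) : \bar R :=
  maxe (u%:E - emin (fun i => (d i * mu i)%:E))%E
    (ereal_sup [set x | exists E, Ecal E /\ x = (u%:E
        - \int[exnu E]_s emin (fun i => (d i * mu i * exdens E i s)%:E)
        - C E mu)%E]).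

Definition assumptionA' (R : realType) (n : nat) (Ecal : experiment R n -> Prop)
    (C : experiment R n -> ('I_n -> R) -> \bar R) (rho : 'I_n -> R) : Prop :=
  exists (eps eta T : R), 0 < eps /\ 0 < eta /\ 0 <= T /\
    forall mu : 'I_n -> R, in_simplex mu -> dist_vec mu rho < eta ->
      exists E, Ecal E /\ (eps%:E < Upsilon E mu)%E /\ (C E mu <= T%:E)%E.

Definition screens (R : realType) (n : nat) (Ecal : experiment R n -> Prop)
    (C : experiment R n -> ('I_n -> R) -> \bar R) (rho : 'I_n -> R)
    (u : R) (d : 'I_n -> R) : Prop :=
  (forall mu, in_simplex mu -> (0 <= W Ecal C u d mu)%E) /\
  (u%:E - emin (fun i => (rho i * d i)%:E) < 0)%E.

(* Main.v *)
Require Import Defs.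
From HB Require Import structures.
From mathcomp Require Import all_boot all_order all_algebra.
From mathcomp Require Import all_classical all_reals.
From mathcomp Require Import ereal measure lebesgue_measure lebesgue_integral probability.
From mathcomp Require Import measurable_realfun.
From mathcomp Require Import ring lra.
Import Order.TTheory GRing.Theory Num.Theory.
Local Open Scope ring_scope.
Local Open Scope classical_set_scope.

Section H.
Variable R : realType.
Local Open Scope ereal_scope.

Lemma emin_le n (f : 'I_n -> \bar R) i : emin f <= f i.
Proof. by rewrite /emin (bigD1 i) //= ge_min lexx. Qed.

Lemma emin_ge n (f : 'I_n -> \bar R) x : (forall i, x <= f i) -> x <= emin f.
Proof.
move=> H; rewrite /emin; apply: (big_ind (fun y => x <= y)) => //.
- exact: leey.
- by move=> a b ha hb; rewrite le_min ha hb.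
Qed.

Lemma emin_att n (f : 'I_n -> \bar R) : (0 < n)%N -> (forall i, f i < +oo) ->
  exists j, emin f = f j.
Proof.
move=> n0 hf.
have : emin f = +oo \/ exists j, emin f = f j.
  rewrite /emin; apply: (big_ind (fun y => y = +oo \/ exists j, y = f j)).
  - by left.
  - by move=> a b ha hb; rewrite minEle; case: ifP.
  - by move=> i _; right; exists i.
case=> // h; have := @emin_le n f (Ordinal n0); rewrite h leye_eq => /eqP hh.
by have := hf (Ordinal n0); rewrite hh ltxx.
Qed.

Lemma emin_meas d (S : measurableType d) n (F : 'I_n -> S -> \bar R) :
  (forall i, measurable_fun setT (F i)) ->
  measurable_fun setT (fun s => emin (fun i => F i s)).
Proof.
move=> mF; rewrite /emin.
suff H : forall r, measurable_fun setT (fun s => \big[mine/+oo]_(i <- r) F i s).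
  exact: H.
elim => [|a r IH].
  by under eq_fun do rewrite big_nil; exact: measurable_cst.
under eq_fun do rewrite big_cons.
exact: measurable_mine.
Qed.

End H.

Section R.
Variable R : realType.

Lemma rho_le1 n (rho : 'I_n -> R) j : (forall i, 0 <= rho i) ->
  \sum_(i < n) rho i = 1 -> rho j <= 1.
Proof.
move=> r0 rs; move: rs; rewrite (bigD1 j) //= => <-.
by rewrite lerDl sumr_ge0.
Qed.

Lemma coord_le_dist n (mu rho : 'I_n -> R) i : mu i - rho i <= dist_vec mu rho.
Proof.
rewrite /dist_vec; apply: le_trans (ler_norm _) _.
rewrite -sqrtr_sqr ler_sqrt; last by apply: sumr_ge0 => k _; exact: sqr_ge0.
by rewrite (bigD1 i) //= lerDl sumr_ge0 // => k _; exact: sqr_ge0.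
Qed.

Lemma far_bound n (mu rho : 'I_n -> R) del : in_simplex mu ->
  in_int_simplex rho -> 0 <= del -> (forall j, (1 - del) * rho j < mu j) ->
  \sum_(i < n) (mu i - rho i) ^+ 2 <= del ^+ 2 *+ n.
Proof.
move=> [m0 ms] [r0 rs] hd h.
have r0' : forall i, 0 <= rho i by move=> i; exact: ltW.
have hb : forall j, (mu j - rho j) ^+ 2 <= del ^+ 2.
  move=> j; have rj1 := @rho_le1 n rho j r0' rs.
  have lo : - del <= mu j - rho j by have hj := h j; have := mulr_ge0 hd (_ : 0 <= 1 - rho j) ; nra.
  have up : mu j - rho j <= del.
    have em := ms; have er := rs.
    rewrite (bigD1 j) //= in em; rewrite (bigD1 j) //= in er.
    set Sm := \sum_(i < n | i != j) mu i in em.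
    set Sr := \sum_(i < n | i != j) rho i in er.
    have hS : (1 - del) * Sr <= Sm.
      rewrite /Sm /Sr mulr_sumr; apply: ler_sum => i _; exact: ltW.
    have Sr0 : 0 <= Sr by apply: sumr_ge0 => i _.
    have Sr1 : Sr <= 1 by have := r0 j; lra.
    have := mulr_ge0 hd (_ : 0 <= 1 - Sr); nra.
  have := mulr_ge0 (_ : 0 <= del - (mu j - rho j)) (_ : 0 <= del + (mu j - rho j)).
  nra.
apply: le_trans (ler_sum _ (fun i _ => hb i)) _.
by rewrite sumr_const card_ord.
Qed.

End R.
Arguments emin_le {R n} f i.
Arguments emin_ge {R n} f x _.
Arguments emin_att {R n} f _ _.
Arguments emin_meas {R d S n} F _.
Arguments rho_le1 {R n} rho j _ _.
Arguments coord_le_dist {R n} mu rho i.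
Arguments far_bound {R n mu rho del}.

Theorem proposition2 (R : realType) (n : nat) (hn : (2 <= n)%N)
    (rho : 'I_n -> R) (hrho : in_int_simplex rho)
    (Ecal : experiment R n -> Prop)
    (C : experiment R n -> ('I_n -> R) -> \bar R)
    (hC : forall E mu, Ecal E -> in_simplex mu -> (0 <= C E mu)%E)
    (hA : assumptionA' Ecal C rho) :
  exists (u : R) (d : 'I_n -> R),
    0 < u /\ (forall i, 0 < d i) /\ screens Ecal C rho u d.
Proof.
case: hA => eps [eta [T [he [heta [hT hE]]]]].
have hrho' := hrho; case: hrho' => rpos rsum.
have n0 : (0 < n)%N by apply: leq_trans hn.
pose j0 : 'I_n := Ordinal n0.
case: (@arg_minP _ R _ j0 predT rho isT) => i0 _ hi0.
have r1 : rho i0 <= 1 := @rho_le1 R n rho i0 (fun i => ltW (rpos i)) rsum.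
set a := Num.min (Num.min eta (eps / 2)) (1 / 2).
have ha0 : 0 < a by rewrite /a !lt_min heta divr_gt0 //= ?ltr01 ?ltr0n.
have hae : a <= eta by rewrite /a !ge_min lexx.
have hae2 : a <= eps / 2 by rewrite /a !ge_min lexx orbT.
have hah : a <= 1 / 2 by rewrite /a !ge_min lexx !orbT.
set nr : R := n%:R.
have hn2 : 2 <= nr by rewrite /nr ler_nat.
set del := a / nr.
have hdel0 : 0 < del by rewrite /del divr_gt0 // (lt_le_trans _ hn2).
have hdela : del <= a / 2.
  rewrite /del ler_pdivrMr ?(lt_le_trans _ hn2) //.
  nra.
set c := 4 * T / eps + 1.
have h4 : 0 <= 4 * T / eps.
  by apply: divr_ge0; [apply: mulr_ge0|]; lra.
have hc0 : 0 < c by rewrite /c; lra.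
have hce : c * eps = 4 * T + eps.
  by rewrite /c mulrDl mul1r divfK // gt_eqF.
exists (c * (1 - del)), (fun i => c / rho i).
have hdel1 : del < 1 by lra.
split; first by rewrite mulr_gt0 // subr_gt0.
split; first by move=> i; rewrite divr_gt0.
split; last first.
  have -> : emin (fun i => (rho i * (c / rho i))%:E) = c%:E.
    have hh : forall i, rho i * (c / rho i) = c.
      by move=> i; rewrite mulrC divfK // gt_eqF.
    apply/eqP; rewrite eq_le; apply/andP; split.
      by apply: le_trans (emin_le _ j0) _; rewrite hh.
    by apply: emin_ge => i; rewrite hh.
  rewrite -EFinB lte_fin subr_lt0; nra.
move=> mu hmu; rewrite /W.
case: (ltP (dist_vec mu rho) a) => hd.
-
  have [E [hEc [hU hCE]]] := hE mu hmu (lt_le_trans hd hae).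
  set u := c * (1 - del).
  set Id := (\int[exnu E]_s emin (fun i => ((c / rho i) * mu i * exdens E i s)%:E))%E.
  rewrite le_max; apply/orP; right.
  apply: (@le_trans _ _ (u%:E - Id - C E mu)%E); last first.
    by apply: ereal_sup_ubound; exists E; split.
  case: hmu => m0 ms.
  set Imu := (\int[exnu E]_s emin (fun i => (mu i * exdens E i s)%:E))%E.
  have hI0 : (0 <= Imu)%E.
    by apply: integral_ge0 => s _; apply: emin_ge => i; rewrite lee_fin mulr_ge0 ?exdens_ge0.
  have hId0 : (0 <= Id)%E.
    apply: integral_ge0 => s _; apply: emin_ge => i.
    rewrite lee_fin; apply: mulr_ge0; last exact: exdens_ge0.
    by apply: mulr_ge0 => //; apply: divr_ge0; apply: ltW.
  have [jm hjm] := emin_att (fun i => (mu i)%:E) n0 (fun i => ltry _).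
  have hjm0 : mu jm <= mu i0.
    by rewrite -lee_fin -hjm; apply: emin_le.
  rewrite /Upsilon -/Imu hjm in hU.
  have hnI : forall s, setT s -> (0 <= emin (fun i => (mu i * exdens E i s)%:E))%E.
    by move=> s _; apply: emin_ge => i; rewrite lee_fin mulr_ge0 ?exdens_ge0.
  have hmI : measurable_fun setT (fun s => emin (fun i => (mu i * exdens E i s)%:E)).
    apply: emin_meas => i; apply/measurable_EFinP.
    by apply: measurable_funM; [exact: measurable_cst|exact: exdens_meas].
  have hk : 0 <= c / rho i0 by apply: divr_ge0; apply: ltW.
  have hZ := @ge0_integralZl_EFin _ _ _ (exnu E) setT measurableT _ hnI hmI _ hk.
  have hIdle : (Id <= (c / rho i0)%:E * Imu)%E.
    rewrite /Imu -hZ.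
    apply: ge0_le_integral => //.
    - move=> s _; apply: emin_ge => i; rewrite lee_fin; apply: mulr_ge0; last exact: exdens_ge0.
      by apply: mulr_ge0 => //; apply: divr_ge0; apply: ltW.
    - apply: emin_meas => i; apply/measurable_EFinP.
      by apply: measurable_funM; [exact: measurable_cst|exact: exdens_meas].
    - exact: measurable_funeM.
    move=> s _.
    have [jj hjj] := emin_att (fun i => (mu i * exdens E i s)%:E) n0 (fun i => ltry _).
    rewrite hjj; apply: le_trans (emin_le _ jj) _.
    rewrite -EFinM lee_fin -mulrA ler_wpM2r ?mulr_ge0 ?exdens_ge0 //.
    rewrite ler_pM2l // lef_pV2 ?posrE //.
    exact: hi0.
  have hdi : mu i0 - rho i0 < a by exact: le_lt_trans (coord_le_dist mu rho i0) hd.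
  have hCn := hC E mu hEc (conj m0 ms).
  clearbody Imu Id.
  case: Imu hU hIdle hI0 => [r| |] hU hIdle hI0; last by [].
    case: Id hIdle hId0 => [s| |] hIdle hId0; last by [].
      case: (C E mu) hCE hCn => [t| |] hCE hCn; last by [].
        rewrite -EFinB lte_fin in hU; rewrite -EFinM lee_fin in hIdle.
        rewrite lee_fin in hCE; rewrite lee_fin in hCn.
        rewrite -!EFinB lee_fin.
        have hq : r / rho i0 <= 1 - eps / 2.
          rewrite ler_pdivrMr //.
          have := mulr_ge0 (ltW he) (_ : 0 <= 1 - rho i0); nra.
        have hKr : c / rho i0 * r = c * (r / rho i0) by ring.
        have hcq : c * (r / rho i0) <= c * (1 - eps / 2) by apply: ler_wpM2l => //; exact: ltW.
        have hcd : c * del <= c * (eps / 4) by apply: ler_wpM2l; [exact: ltW|lra].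
        rewrite /u; nra.
      by [].
    by [].
  by move: hU; rewrite /= ltNge leNye.
-
  have [j hj] : exists j, mu j <= (1 - del) * rho j.
    case: (pselect (exists j, mu j <= (1 - del) * rho j)) => // hno.
    have hall : forall j, (1 - del) * rho j < mu j.
      by move=> j; rewrite ltNge; apply/negP => hh; apply: hno; exists j.
    have hs := far_bound hmu hrho (ltW hdel0) hall.
    have : dist_vec mu rho < a.
      rewrite /dist_vec -(@ger0_norm _ a) ?ltW // -sqrtr_sqr ltr_sqrt ?exprn_gt0 //.
      apply: le_lt_trans hs _.
      rewrite /del -mulr_natr /nr expr_div_n.
      rewrite -/nr.
      have nr0 : nr != 0 by rewrite gt_eqF // (lt_le_trans _ hn2).
      have -> : a ^+ 2 / nr ^+ 2 * nr = a ^+ 2 / nr by field.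
      rewrite ltr_pdivrMr ?(lt_le_trans _ hn2) //.
      have := exprn_gt0 2 ha0; nra.
    by rewrite ltNge hd.
  rewrite le_max; apply/orP; left.
  apply: le_trans (leeB (lexx _) (emin_le _ j)).
  rewrite -EFinB lee_fin subr_ge0 mulrAC ler_pdivrMr //.
  nra.
Qed.
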